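(* Let $P=P_1\cup P_2$ be a finite set of points in the plane with $P$ generic, such that $P_1$ is contained in a disk of radius $1$ centered at a point $o$, and every point $a\in P_2$ satisfies $|oa|>3$ and lies in a fixed wedge with apex $o$ and angle $3.6^\circ$. Then $T_P$ contains exactly one edge connecting a point of $P_1$ to a point of $P_2$ (i.e., only one such edge).
   Context: A finite planar point set is generic if no three of its points are collinear and every subset has a unique Euclidean minimum spanning tree (MST); $T_P$ denotes the MST of $P$. $|uv|$ is the Euclidean distance. *)

(* Defs.v *)
From mathcomp Require Import all_boot all_order all_algebra.
From mathcomp Require Import reals trigo.
Set Implicit Arguments. Unset Strict Implicit. Unset Printing Implicit Defensive.
Import Order.TTheory GRing.Theory Num.Theory.
Local Open Scope ring_scope.

Definition point (R : realType) := (R * R)%type.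

Definition dist (R : realType) (a b : point R) : R :=
  Num.sqrt ((a.1 - b.1) ^+ 2 + (a.2 - b.2) ^+ 2).

Definition collinear (R : realType) (a b c : point R) : Prop :=
  (b.1 - a.1) * (c.2 - a.2) - (b.2 - a.2) * (c.1 - a.1) = 0.

(* A finite point set P is given as an injective enumeration p : 'I_n -> point R;
   subsets of P are subsets S : {set 'I_n}; an (undirected) edge is a 2-element
   set of indices, a graph is a set of edges. *)

Definition edges_within n (S : {set 'I_n}) (E : {set {set 'I_n}}) : Prop :=
  forall e, e \in E -> e \subset S /\ #|e| = 2.

Definition adj n (E : {set {set 'I_n}}) : rel 'I_n :=
  fun i j => [set i; j] \in E.

Definition connected_on n (S : {set 'I_n}) (E : {set {set 'I_n}}) : Prop :=
  forall i j, i \in S -> j \in S -> connect (adj E) i j.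

Definition acyclic n (E : {set {set 'I_n}}) : Prop :=
  forall i j, [set i; j] \in E -> ~~ connect (adj (E :\ [set i; j])) i j.

Definition spanning_tree n (S : {set 'I_n}) (E : {set {set 'I_n}}) : Prop :=
  [/\ edges_within S E, connected_on S E & acyclic E].

(* Length of an edge e = {i, j}: (d(i,i)+d(i,j)+d(j,i)+d(j,j))/2 = |p_i p_j|. *)
Definition edge_len (R : realType) n (p : 'I_n -> point R) (e : {set 'I_n}) : R :=
  (\sum_(i in e) \sum_(j in e) dist (p i) (p j)) / 2.

Definition weight (R : realType) n (p : 'I_n -> point R) (E : {set {set 'I_n}}) : R :=
  \sum_(e in E) edge_len p e.

Definition is_MST (R : realType) n (p : 'I_n -> point R) (S : {set 'I_n})
  (E : {set {set 'I_n}}) : Prop :=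
  spanning_tree S E /\
  forall E', spanning_tree S E' -> weight p E <= weight p E'.

Definition unique_MST (R : realType) n (p : 'I_n -> point R) (S : {set 'I_n}) : Prop :=
  exists E, is_MST p S E /\ forall E', is_MST p S E' -> E' = E.

Definition generic (R : realType) n (p : 'I_n -> point R) : Prop :=
  [/\ injective p,
      (forall i j k : 'I_n, i != j -> j != k -> i != k ->
         ~ collinear (p i) (p j) (p k))
    & forall S : {set 'I_n}, unique_MST p S].

Definition in_wedge (R : realType) (o : point R) (theta0 alpha : R) (a : point R) : Prop :=
  exists r phi : R, [/\ 0 <= r, theta0 <= phi <= theta0 + alpha &
    a = (o.1 + r * cos phi, o.2 + r * sin phi)].

Definition crossing n (A B : {set 'I_n}) (e : {set 'I_n}) : bool :=
  [exists i in A, exists j in B, e == [set i; j]].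

(* Main.v *)
Require Import Defs.
From mathcomp Require Import all_boot all_order all_algebra.
From mathcomp Require Import reals trigo.
From mathcomp Require Import lra.
Import Order.TTheory GRing.Theory Num.Theory.
Local Open Scope ring_scope.

Lemma dist_ge0 (R : realType) (x y : point R) : 0 <= dist x y.
Proof. exact: sqrtr_ge0. Qed.

Lemma dist_sym (R : realType) (x y : point R) : dist x y = dist y x.
Proof. by rewrite /dist (sqrrB x.1) (sqrrB y.1) (sqrrB x.2) (sqrrB y.2); congr Num.sqrt; lra. Qed.

Lemma dist_xx (R : realType) (x : point R) : dist x x = 0.
Proof. by rewrite /dist !subrr expr0n /= addr0 sqrtr0. Qed.

Lemma sqrt_tri (R : realType) (a1 a2 b1 b2 : R) :
  Num.sqrt ((a1 + b1) ^+ 2 + (a2 + b2) ^+ 2) <=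
  Num.sqrt (a1 ^+ 2 + a2 ^+ 2) + Num.sqrt (b1 ^+ 2 + b2 ^+ 2).
Proof.
set sA := Num.sqrt (a1 ^+ 2 + a2 ^+ 2); set sB := Num.sqrt (b1 ^+ 2 + b2 ^+ 2).
have hA0 : 0 <= sA by exact: sqrtr_ge0.
have hB0 : 0 <= sB by exact: sqrtr_ge0.
have hA : sA ^+ 2 = a1 ^+ 2 + a2 ^+ 2 by rewrite sqr_sqrtr //; nra.
have hB : sB ^+ 2 = b1 ^+ 2 + b2 ^+ 2 by rewrite sqr_sqrtr //; nra.
have hAB0 : 0 <= sA * sB by exact: mulr_ge0.
have hCS : (a1 * b1 + a2 * b2) ^+ 2 <= (sA * sB) ^+ 2.
  rewrite exprMn hA hB.
  have : 0 <= (a1 * b2 - a2 * b1) ^+ 2 by exact: sqr_ge0.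
  move=> h; nra.
have hdot : a1 * b1 + a2 * b2 <= sA * sB.
  case: (lerP (a1 * b1 + a2 * b2) (sA * sB)) => // hlt; nra.
rewrite -(ger0_norm (addr_ge0 hA0 hB0)) -sqrtr_sqr ler_sqrt; last exact: sqr_ge0.
nra.
Qed.

Lemma dist_tri (R : realType) (x y z : point R) : dist x z <= dist x y + dist y z.
Proof.
rewrite /dist.
have e1 : x.1 - z.1 = (x.1 - y.1) + (y.1 - z.1) by lra.
have e2 : x.2 - z.2 = (x.2 - y.2) + (y.2 - z.2) by lra.
rewrite e1 e2; exact: sqrt_tri.
Qed.

Lemma cos_pi8 (R : realType) : 9 / 10 <= cos (pi / 8 : R).
Proof.
have pi_pos : (0 : R) < pi := pi_gt0 R.
have c4pos : 0 < cos (pi / 4 : R).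
  apply: cos_gt0_pihalf; apply/andP; split; lra.
have c8pos : 0 < cos (pi / 8 : R).
  apply: cos_gt0_pihalf; apply/andP; split; lra.
have h4 : cos (pi / 2 : R) = cos (pi / 4) ^+ 2 *+ 2 - 1.
  rewrite -cos_mulr2n; congr cos; rewrite (mulr2n (pi / 4)); lra.
have h8 : cos (pi / 4 : R) = cos (pi / 8) ^+ 2 *+ 2 - 1.
  rewrite -cos_mulr2n; congr cos; rewrite (mulr2n (pi / 8)); lra.
rewrite cos_pihalf (mulr2n (cos (pi / 4) ^+ 2)) in h4; rewrite (mulr2n (cos (pi / 8) ^+ 2)) in h8.
have c4 : 7 / 10 <= cos (pi / 4 : R) by nra.
nra.
Qed.

Lemma cos_small (R : realType) (d : R) : `|d| <= pi / 50 -> 9 / 10 <= cos d.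
Proof.
move=> hd.
have pi_pos : (0 : R) < pi := pi_gt0 R.
rewrite -cos_norm; apply: le_trans (cos_pi8 R) _.
have hn : 0 <= `|d| by [].
case: (ltrP `|d| (pi / 8)) => h.
  apply/ltW; rewrite ltr_cos // in_itv /=; apply/andP; split; lra.
have -> : `|d| = pi / 8 by lra.
by [].
Qed.

From mathcomp Require Import ring.

Lemma dist_polar (R : realType) (o : point R) (r phi : R) : 0 <= r ->
  dist o (o.1 + r * cos phi, o.2 + r * sin phi) = r.
Proof.
move=> hr; rewrite /dist /=.
have -> : (o.1 - (o.1 + r * cos phi)) ^+ 2 + (o.2 - (o.2 + r * sin phi)) ^+ 2
          = r ^+ 2 * (cos phi ^+ 2 + sin phi ^+ 2) by ring.
by rewrite cos2Dsin2 mulr1 sqrtr_sqr ger0_norm.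
Qed.

Lemma geo (R : realType) (o a' b b' : point R) (th : R) :
  dist o a' <= 1 -> in_wedge o th (pi / 50) b -> in_wedge o th (pi / 50) b' ->
  3 < dist o b -> dist o b <= dist o b' -> dist b b' < dist a' b'.
Proof.
move=> ha [r [phi [hr /andP[hp1 hp2] ->]]] [s [psi [hs /andP[hq1 hq2] ->]]].
rewrite !dist_polar // => h3 hrs.
have htri := dist_tri _ o a' (o.1 + s * cos psi, o.2 + s * sin psi).
rewrite dist_polar // in htri.
apply: (@lt_le_trans _ _ (s - 1)); last by lra.
have hc : 9 / 10 <= cos (phi - psi).
  apply: cos_small; rewrite ler_norml; apply/andP; split; lra.
have hp := cos2Dsin2 phi; have hq := cos2Dsin2 psi.
rewrite /dist /=.
have -> : (o.1 + r * cos phi - (o.1 + s * cos psi)) ^+ 2 +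
          (o.2 + r * sin phi - (o.2 + s * sin psi)) ^+ 2
          = r ^+ 2 + s ^+ 2 - 2 * r * s * cos (phi - psi).
  rewrite cosB.
  transitivity (r ^+ 2 * (cos phi ^+ 2 + sin phi ^+ 2) + s ^+ 2 * (cos psi ^+ 2 + sin psi ^+ 2)
     - 2 * r * s * (cos phi * cos psi + sin phi * sin psi)); first by ring.
  by rewrite hp hq; ring.
have hs1 : 0 < s - 1 by lra.
rewrite -(gtr0_norm hs1) -sqrtr_sqr ltr_sqrt; last by rewrite exprn_gt0.
have hrs0 : 0 <= r * s by nra.
have h1 : 9 / 10 * (r * s) <= r * s * cos (phi - psi) by nra.
have h2 : r * (9 / 10 * r - 1) <= s * (9 / 10 * r - 1) by nra.
nra.
Qed.


Lemma adj_sym n (E : {set {set 'I_n}}) : symmetric (adj E).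
Proof. by move=> i j; rewrite /adj setUC. Qed.

Lemma conn_sym n (E : {set {set 'I_n}}) x y :
  connect (adj E) x y = connect (adj E) y x.
Proof. exact: (sym_connect_sym (@adj_sym n E)). Qed.

Lemma conn_sub n (E F : {set {set 'I_n}}) : E \subset F ->
  forall x y, connect (adj E) x y -> connect (adj F) x y.
Proof.
move=> sEF; apply: connect_sub => x y hxy; apply: connect1.
by rewrite /adj (subsetP sEF).
Qed.

Arguments conn_sub {n E F} _ {x y}.

Lemma split_conn n (E : {set {set 'I_n}}) (u v x y : 'I_n) :
  connect (adj E) x y ->
  connect (adj (E :\ [set u; v])) x y \/
  (connect (adj (E :\ [set u; v])) x u /\ connect (adj (E :\ [set u; v])) v y) \/
  (connect (adj (E :\ [set u; v])) x v /\ connect (adj (E :\ [set u; v])) u y).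
Proof.
set C := connect (adj (E :\ [set u; v])).
have Ctr : forall a b c, C a b -> C b c -> C a c by move=> a b c; apply: connect_trans.
have Csym : forall a b, C a b -> C b a by move=> a b; rewrite /C conn_sym.
have C0 : forall a, C a a by move=> a; exact: connect0.
case/connectP => s; elim: s x => [|z s IH] x /=.
  by move=> _ ->; left; exact: C0.
case/andP => hxz hp hy; have := IH z hp hy.
case: (boolP ([set x; z] == [set u; v])) => [/eqP exz | nxz].
  have xin : x \in [set u; v] by rewrite -exz set21.
  have zin : z \in [set u; v] by rewrite -exz set22.
  move: xin zin; rewrite !inE => /orP[]/eqP hx /orP[]/eqP hz; subst x z;
  intuition eauto.
have hC : C x z by apply: connect1; rewrite /adj !inE nxz.
intuition eauto.
Qed.

Arguments split_conn {n E} u v {x y}.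

Lemma cross_edge n (E : {set {set 'I_n}}) (A : {set 'I_n}) x y :
  connect (adj E) x y -> x \in A -> y \notin A ->
  exists i j, [/\ i \in A, j \notin A & [set i; j] \in E].
Proof.
case/connectP => s; elim: s x => [|z s IH] x /=.
  by move=> _ -> ->.
case/andP => hxz hp hy hx hyA.
case: (boolP (z \in A)) => hz; first exact: IH hp hy hz hyA.
by exists x, z.
Qed.

Arguments cross_edge {n E A x y}.

Lemma edge_len2 (R : realType) n (p : 'I_n -> point R) i j :
  i != j -> edge_len p [set i; j] = dist (p i) (p j).
Proof.
move=> hij.
have hij' : i \notin [set j] by rewrite inE.
rewrite /edge_len big_setU1 // big_set1 !big_setU1 // !big_set1 !dist_xx.
rewrite (dist_sym _ (p j)) /= add0r addr0; lra.
Qed.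

Lemma exchange (R : realType) n (p : 'I_n -> point R) (T : {set {set 'I_n}}) a b u v :
  is_MST p setT T -> [set a; b] \in T ->
  connect (adj (T :\ [set a; b])) a u -> ~~ connect (adj (T :\ [set a; b])) a v ->
  dist (p a) (p b) <= dist (p u) (p v).
Proof.
move=> [[hw hc hac] hmin] heT hau hav.
set e := [set a; b] in heT hau hav *.
set T1 := T :\ e in hau hav *.
set f := [set u; v].
have Csym : forall E (x y : 'I_n), connect (adj E) x y -> connect (adj E) y x.
  by move=> E x y; rewrite conn_sym.
have hab : a != b.
  by have := (hw e heT).2; rewrite /e cards2; case: (a != b).
have huv : u != v by apply/eqP => huv; subst v; rewrite hau in hav.
have hfT1 : f \notin T1.
  apply/negP => hf; apply: (negP hav); apply: (connect_trans hau).
  by apply: connect1; rewrite /adj.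
have hbv : connect (adj T1) b v.
  have := split_conn a b (hc a v (in_setT a) (in_setT v)).
  rewrite -/e -/T1 (negbTE hav); case=> [//|[[_ ->]//|[_ //]]].
set T' := f |: T1.
have sub1 : T1 \subset T' by exact: subsetUr.
have hfT' : adj T' u v by rewrite /adj setU11.
have hst : spanning_tree setT T'.
  split.
  - move=> g; rewrite !inE => /orP[/eqP -> | /andP[_ hg]].
      by split; [exact: subsetT | rewrite cards2 huv].
    exact: hw g hg.
  - move=> i j _ _.
    have hC'ab : connect (adj T') a b.
      apply: (connect_trans (conn_sub sub1 hau)).
      apply: (connect_trans (connect1 hfT')).
      exact: (conn_sub sub1 (Csym _ _ _ hbv)).
    have := split_conn a b (hc i j (in_setT i) (in_setT j)); rewrite -/e -/T1.
    case=> [h|[[h1 h2]|[h1 h2]]].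
    + exact: (conn_sub sub1 h).
    + apply: (connect_trans (conn_sub sub1 h1)).
      exact: (connect_trans hC'ab (conn_sub sub1 h2)).
    + apply: (connect_trans (conn_sub sub1 h1)).
      exact: (connect_trans (Csym _ _ _ hC'ab) (conn_sub sub1 h2)).
  - move=> i j hg.
    case: (boolP ([set i; j] == f)) => [/eqP hgf | hgf].
      have sub : T' :\ [set i; j] \subset T1.
        apply/subsetP => x; rewrite !inE hgf => /andP[hx /orP[/eqP hxf|//]].
        by rewrite hxf eqxx in hx.
      apply/negP => hij; have hij1 := conn_sub sub hij.
      have ug : u \in [set i; j] by rewrite hgf set21.
      have vg : v \in [set i; j] by rewrite hgf set22.
      have huv1 : connect (adj T1) u v.
        move: ug vg; rewrite !inE => /orP[]/eqP hu /orP[]/eqP hv; subst u v;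
        by [exact: connect0 | exact: hij1 | exact: Csym].
      by move: hav; rewrite (connect_trans hau huv1).
    have hgT1 : [set i; j] \in T1.
      by move: hg; rewrite !inE (negbTE hgf).
    have hgT : [set i; j] \in T by move: hgT1; rewrite !inE => /andP[].
    have hijT1 : connect (adj T1) i j by apply: connect1.
    apply/negP => hij.
    have sub2 : (T' :\ [set i; j]) :\ [set u; v] \subset T :\ [set i; j].
      apply/subsetP => x; rewrite /T' /T1 !inE => /and3P[hxf hxg /orP[hxf'|/andP[_ hxT]]].
        by move/eqP: hxf' hxf => ->; rewrite eqxx.
      by rewrite hxg hxT.
    have sub3 : (T' :\ [set i; j]) :\ [set u; v] \subset T1.
      apply/subsetP => x; rewrite /T' /T1 !inE => /and3P[hxf hxg /orP[hxf'|/andP[he hxT]]].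
        by move/eqP: hxf' hxf => ->; rewrite eqxx.
      by rewrite he hxT.
    have := split_conn u v hij.
    case=> [h|[[h1 h2]|[h1 h2]]].
    + by move: (hac i j hgT); rewrite (conn_sub sub2 h).
    + have h1' := conn_sub sub3 h1; have h2' := conn_sub sub3 h2.
      have huv1 : connect (adj T1) u v.
        apply: (connect_trans (Csym _ _ _ h1')).
        exact: (connect_trans hijT1 (Csym _ _ _ h2')).
      by move: hav; rewrite (connect_trans hau huv1).
    + have h1' := conn_sub sub3 h1; have h2' := conn_sub sub3 h2.
      have huv1 : connect (adj T1) u v.
        apply: (connect_trans h2').
        exact: (connect_trans (Csym _ _ _ hijT1) h1').
      by move: hav; rewrite (connect_trans hau huv1).
have := hmin T' hst.
rewrite /weight big_setU1 //= (big_setD1 _ heT) /= -/T1 !edge_len2 //.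
lra.
Qed.

Arguments exchange {R n p T a b u v}.
Arguments geo {R}.

Theorem lemma3 (R : realType) (n : nat) (p : 'I_n -> point R)
  (P1 P2 : {set 'I_n}) (o : point R) :
  generic p ->
  P1 :|: P2 = [set: 'I_n] ->
  P1 != set0 -> P2 != set0 ->
  (forall i, i \in P1 -> dist o (p i) <= 1) ->
  (forall a, a \in P2 -> 3 < dist o (p a)) ->
  (exists theta0 : R, forall a, a \in P2 -> in_wedge o theta0 (pi / 50) (p a)) ->
  forall T : {set {set 'I_n}}, is_MST p [set: 'I_n] T ->
    #|[set e in T | crossing P1 P2 e]| = 1%N.
Proof.
move=> _ hU hP1n hP2n hd1 hd2 [th hw] T hT.
have [[hwT hcT haT] hmin] := hT.
have disj : forall x, x \in P1 -> x \notin P2.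
  move=> x h1; apply/negP => h2; have := hd1 x h1; have := hd2 x h2; lra.
have inP2 : forall x, x \notin P1 -> x \in P2.
  move=> x hx; have : x \in P1 :|: P2 by rewrite hU inE.
  by rewrite inE (negbTE hx).
have dP1 : forall x y, x \in P1 -> y \in P1 -> dist (p x) (p y) <= 2.
  move=> x y hx hy; have h := dist_tri _ (p x) o (p y); rewrite (dist_sym _ (p x) o) in h.
  have := hd1 x hx; have := hd1 y hy; lra.
have dP12 : forall x y, x \in P1 -> y \in P2 -> 2 < dist (p x) (p y).
  move=> x y hx hy; have := dist_tri _ o (p x) (p y).
  have := hd1 x hx; have := hd2 y hy; lra.
have half : forall a b a' b', a \in P1 -> b \in P2 -> a' \in P1 ->
    [set a; b] \in T -> [set a'; b'] \in T -> [set a; b] != [set a'; b'] ->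
    connect (adj (T :\ [set a; b])) a b'.
  move=> a b a' b' ha hb ha' he1 he2 hne.
  have haa' : connect (adj (T :\ [set a; b])) a a'.
    case: (boolP (connect (adj (T :\ [set a; b])) a a')) => // hn.
    have := exchange hT he1 (connect0 _ a) hn.
    have := dP1 a a' ha ha'; have := dP12 a b ha hb; lra.
  apply: (connect_trans haa'); apply: connect1.
  by rewrite /adj !inE he2 eq_sym hne.
have memC : forall e, e \in [set e in T | crossing P1 P2 e] ->
    exists a b, [/\ a \in P1, b \in P2, e = [set a; b] & e \in T].
  move=> e; rewrite inE => /andP[heT /existsP[a /andP[ha /existsP[b /andP[hb /eqP he]]]]].
  by exists a, b.
apply/eqP; rewrite eqn_leq; apply/andP; split.
  apply/card_le1_eqP => e1 e2 h1 h2.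
  have [a [b [ha hb -> he1]]] := memC e1 h1.
  have [a' [b' [ha' hb' -> he2]]] := memC e2 h2.
  case: (boolP ([set a; b] == [set a'; b'])) => [/eqP //|hne].
  exfalso.
  have hb'A := half a b a' b' ha hb ha' he1 he2 hne.
  have hne' : [set a'; b'] != [set a; b] by rewrite eq_sym.
  have hbA := half a' b' a b ha' hb' ha he2 he1 hne'.
  have ex1 := exchange hT he1 hb'A (haT a b he1).
  have ex2 := exchange hT he2 hbA (haT a' b' he2).
  case: (lerP (dist o (p b)) (dist o (p b'))) => h.
    have := geo o (p a') (p b) (p b') th (hd1 a' ha') (hw b hb) (hw b' hb') (hd2 b hb) h.
    lra.
  have := geo o (p a) (p b') (p b) th (hd1 a ha) (hw b' hb') (hw b hb) (hd2 b' hb') (ltW h).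
  lra.
rewrite card_gt0; apply/set0Pn.
have [x hx] := set0Pn _ hP1n; have [y hy] := set0Pn _ hP2n.
have hyn : y \notin P1 by apply/negP => h; move: (disj y h); rewrite hy.
have [i [j [hi hj hij]]] := cross_edge (hcT x y (in_setT x) (in_setT y)) hx hyn.
exists [set i; j]; rewrite inE hij /=.
apply/existsP; exists i; rewrite hi /=; apply/existsP; exists j.
by rewrite (inP2 j hj) eqxx.
Qed.
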